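(* In $\mathbf{AlgTh}$: every cosystem of Lawvere equations has a general cosolution; the Lawvere covarieties are precisely the morphisms of theories that are full and bijective on objects; and every Lawvere covariety is a coequalizer of some reflexive pair $P,Q$ forming a Lawvere equation.
   Context: An algebraic theory is a small category with finite products; $\mathbf{AlgTh}$ is the category of algebraic theories with finite-product-preserving functors (morphisms of theories). An equation $f\approx g$ is a pair of parallel morphisms. A cosystem of equations is a non-empty set of equations with a common codomain $A$; a cosolution is a morphism $a$ with domain $A$ such that $af=ag$ for all $f\approx g$ in it; a general cosolution is a cosolution $v$ such that every cosolution $a$ factors uniquely as $a=\tilde a v$. A Lawvere equation is a pair $P,Q:\mathcal{T}'\to\mathcal{T}$ of morphisms of theories such that there is a morphism of theories $U:\mathcal{T}''\to\mathcal{T}'$, surjective on objects, with $PU=QU$. A Lawvere covariety is a general cosolution of some cosystem of Lawvere equations. A pair $P,Q:\mathcal{T}'\to\mathcal{T}$ is reflexive if there is a morphism of theories $S:\mathcal{T}\to\mathcal{T}'$ with $PS=QS=1_{\mathcal{T}}$. *)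

(* Defs.v *)
Set Implicit Arguments.
Unset Strict Implicit.

Record Category := {
  Ob :> Type;
  Hom : Ob -> Ob -> Type;
  idm : forall A, Hom A A;
  comp : forall A B C, Hom B C -> Hom A B -> Hom A C;
  comp_id_l : forall A B (f : Hom A B), comp (idm B) f = f;
  comp_id_r : forall A B (f : Hom A B), comp f (idm A) = f;
  comp_assoc : forall A B C D (h : Hom C D) (g : Hom B C) (f : Hom A B),
      comp h (comp g f) = comp (comp h g) f
}.
Arguments idm {c} A.
Arguments comp {c A B C} _ _.

Definition is_terminal (C : Category) (t : C) : Prop :=
  forall X : C, exists f : Hom X t, forall g : Hom X t, g = f.

Definition is_product (C : Category) (a b p : C) (p1 : Hom p a) (p2 : Hom p b)
  : Prop :=
  forall (X : C) (f : Hom X a) (g : Hom X b),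
    exists h : Hom X p, comp p1 h = f /\ comp p2 h = g /\
      forall h' : Hom X p, comp p1 h' = f -> comp p2 h' = g -> h' = h.

Definition has_finite_products (C : Category) : Prop :=
  (exists t : C, is_terminal t) /\
  (forall a b : C, exists (p : C) (p1 : Hom p a) (p2 : Hom p b), is_product p1 p2).

Record Theory := {
  th_cat :> Category;
  th_fp : has_finite_products th_cat
}.

Record TMor (S T : Theory) := {
  fobj :> S -> T;
  fmap : forall A B : S, Hom A B -> Hom (fobj A) (fobj B);
  fmap_id : forall A : S, fmap (idm A) = idm (fobj A);
  fmap_comp : forall (A B C : S) (g : Hom B C) (f : Hom A B),
      fmap (comp g f) = comp (fmap g) (fmap f);
  pres_terminal : forall t : S, is_terminal t -> is_terminal (fobj t);
  pres_product : forall (a b p : S) (p1 : Hom p a) (p2 : Hom p b),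
      is_product p1 p2 -> is_product (fmap p1) (fmap p2)
}.
Arguments fmap {S T} _ {A B} _.

Definition tid (T : Theory) : TMor T T :=
  {| fobj := fun A => A; fmap := fun A B f => f;
     fmap_id := fun A => eq_refl; fmap_comp := fun A B C g f => eq_refl;
     pres_terminal := fun t H => H;
     pres_product := fun a b p p1 p2 H => H |}.

Program Definition tcomp (R S T : Theory) (G : TMor S T) (F : TMor R S)
  : TMor R T :=
  {| fobj := fun A => G (F A); fmap := fun A B f => fmap G (fmap F f) |}.
Next Obligation. intros; simpl; rewrite !fmap_id; reflexivity. Qed.
Next Obligation. intros; simpl; rewrite !fmap_comp; reflexivity. Qed.
Next Obligation. intros; simpl; apply pres_terminal, pres_terminal; assumption. Qed.
Next Obligation. intros; simpl; apply pres_product, pres_product; assumption. Qed.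

Record Cosystem (A : Theory) := {
  cs_index : Type;
  cs_nonempty : inhabited cs_index;
  cs_dom : cs_index -> Theory;
  cs_P : forall i, TMor (cs_dom i) A;
  cs_Q : forall i, TMor (cs_dom i) A
}.

Definition is_cosolution (A B : Theory) (E : Cosystem A) (a : TMor A B) : Prop :=
  forall i : cs_index E, tcomp a (cs_P i) = tcomp a (cs_Q i).

Definition is_general_cosolution (A V : Theory) (E : Cosystem A) (v : TMor A V)
  : Prop :=
  is_cosolution E v /\
  forall (B : Theory) (a : TMor A B), is_cosolution E a ->
    exists at_ : TMor V B, tcomp at_ v = a /\
      forall b : TMor V B, tcomp b v = a -> b = at_.

Definition surjective_on_objects (S T : Theory) (U : TMor S T) : Prop :=
  forall y : T, exists x : S, U x = y.

Definition bijective_on_objects (S T : Theory) (U : TMor S T) : Prop :=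
  (forall x y : S, U x = U y -> x = y) /\ surjective_on_objects U.

Definition full (S T : Theory) (U : TMor S T) : Prop :=
  forall (A B : S) (g : Hom (U A) (U B)), exists f : Hom A B, fmap U f = g.

Definition is_Lawvere_equation (T' T : Theory) (P Q : TMor T' T) : Prop :=
  exists (T'' : Theory) (U : TMor T'' T'),
    surjective_on_objects U /\ tcomp P U = tcomp Q U.

Definition is_Lawvere_cosystem (A : Theory) (E : Cosystem A) : Prop :=
  forall i : cs_index E, is_Lawvere_equation (cs_P i) (cs_Q i).

Definition is_Lawvere_covariety (T V : Theory) (v : TMor T V) : Prop :=
  exists E : Cosystem T, is_Lawvere_cosystem E /\ is_general_cosolution E v.

Definition is_reflexive_pair (T' T : Theory) (P Q : TMor T' T) : Prop :=
  exists S : TMor T T', tcomp P S = tid T /\ tcomp Q S = tid T.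

Definition is_coequalizer (T' T V : Theory) (P Q : TMor T' T) (v : TMor T V)
  : Prop :=
  tcomp v P = tcomp v Q /\
  forall (B : Theory) (a : TMor T B), tcomp a P = tcomp a Q ->
    exists at_ : TMor V B, tcomp at_ v = a /\
      forall b : TMor V B, tcomp b v = a -> b = at_.

(* Main.v *)
Require Import Defs.
From Stdlib Require Import FunctionalExtensionality ProofIrrelevance PropExtensionality ClassicalEpsilon Eqdep.
Set Implicit Arguments.
Unset Strict Implicit.

Definition Arr (C : Category) := {xy : Ob C * Ob C & Hom (fst xy) (snd xy)}.
Definition arr (C : Category) (X Y : C) (f : Hom X Y) : Arr C :=
  existT (fun xy : Ob C * Ob C => Hom (fst xy) (snd xy)) (X, Y) f.

Lemma arr_inj (C : Category) (X Y : C) (f g : Hom X Y) : arr f = arr g -> f = g.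
Proof. intro H. exact (Eqdep.EqdepTheory.inj_pair2 _ _ _ _ _ H). Qed.

Lemma arr_objs (C : Category) (X Y X' Y' : C) (f : Hom X Y) (g : Hom X' Y') :
  arr f = arr g -> X = X' /\ Y = Y'.
Proof. intro H. apply (f_equal (@projT1 _ _)) in H. simpl in H. inversion H; auto. Qed.

Lemma arr_comp (C : Category) (A B C0 A' B' C' : C) (u : Hom B C0) (w : Hom A B)
  (u' : Hom B' C') (w' : Hom A' B') :
  arr u = arr u' -> arr w = arr w' -> arr (comp u w) = arr (comp u' w').
Proof.
  intros H1 H2. destruct (arr_objs H1) as [e1 e2]. destruct (arr_objs H2) as [e3 e4].
  subst. apply arr_inj in H1. apply arr_inj in H2. subst. reflexivity.
Qed.

Lemma arr_map (S T : Theory) (F : TMor S T) (X Y X' Y' : S) (g : Hom X Y) (g' : Hom X' Y') :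
  arr g = arr g' -> arr (fmap F g) = arr (fmap F g').
Proof.
  intro H. destruct (arr_objs H) as [e1 e2]. subst. apply arr_inj in H. subst. reflexivity.
Qed.

Lemma arr_transport (C : Category) (X Y X' Y' : C) (g : Hom X Y) :
  X' = X -> Y' = Y -> exists h : Hom X' Y', arr h = arr g.
Proof. intros; subst; exists g; reflexivity. Qed.

Lemma tmor_arr (S T : Theory) (F G : TMor S T) (A B : S) (f : Hom A B) :
  F = G -> arr (fmap F f) = arr (fmap G f).
Proof. intro H; subst; reflexivity. Qed.

Lemma tmor_obj (S T : Theory) (F G : TMor S T) (A : S) : F = G -> F A = G A.
Proof. intro H; subst; reflexivity. Qed.

Lemma tmor_ext (S T : Theory) (F G : TMor S T) :
  (forall A, F A = G A) ->
  (forall (A B : S) (f : Hom A B), arr (fmap F f) = arr (fmap G f)) -> F = G.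
Proof.
  destruct F as [fo fm fi fc ft fp], G as [go gm gi gc gt gp]; simpl; intros Ho Hm.
  assert (fo = go) by (apply functional_extensionality; auto). subst go.
  assert (fm = gm).
  { apply functional_extensionality_dep; intro A.
    apply functional_extensionality_dep; intro B.
    apply functional_extensionality; intro f. apply arr_inj, Hm. }
  subst gm. f_equal; apply proof_irrelevance.
Qed.

Lemma tcomp_assoc (R S T U : Theory) (H : TMor T U) (G : TMor S T) (F : TMor R S) :
  tcomp (tcomp H G) F = tcomp H (tcomp G F).
Proof. apply tmor_ext; reflexivity. Qed.

Lemma tcomp_id_l (S T : Theory) (F : TMor S T) : tcomp (tid T) F = F.
Proof. apply tmor_ext; reflexivity. Qed.
Lemma tcomp_id_r (S T : Theory) (F : TMor S T) : tcomp F (tid S) = F.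
Proof. apply tmor_ext; reflexivity. Qed.

Lemma prod_uniq (C : Category) (a b p : C) (p1 : Hom p a) (p2 : Hom p b) X (h h' : Hom X p) :
  is_product p1 p2 -> comp p1 h = comp p1 h' -> comp p2 h = comp p2 h' -> h = h'.
Proof.
  intros P e1 e2. destruct (P X (comp p1 h) (comp p2 h)) as [k [_ [_ U]]].
  rewrite (U h eq_refl eq_refl). symmetry. apply U; auto.
Qed.

Lemma term_uniq (C : Category) (t X : C) (g g' : Hom X t) : is_terminal t -> g = g'.
Proof. intro H. destruct (H X) as [f Hf]. rewrite (Hf g), (Hf g'). reflexivity. Qed.

Lemma prod_retract (C : Category) (a b p p' : C) (p1 : Hom p a) (p2 : Hom p b)
  (p1' : Hom p' a) (p2' : Hom p' b) (m : Hom p p') (n : Hom p' p) :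
  is_product p1 p2 -> comp p1' m = p1 -> comp p2' m = p2 ->
  comp p1 n = p1' -> comp p2 n = p2' -> comp m n = idm p' -> is_product p1' p2'.
Proof.
  intros P e1 e2 e3 e4 e5 X f g.
  destruct (P X f g) as [h [h1 [h2 U]]].
  exists (comp m h). split; [|split].
  - rewrite comp_assoc, e1; auto.
  - rewrite comp_assoc, e2; auto.
  - intros k k1 k2. rewrite <- (comp_id_l k), <- e5, <- comp_assoc. f_equal.
    apply U; rewrite comp_assoc; [rewrite e3 | rewrite e4]; auto.
Qed.

Lemma term_retract (C : Category) (t t' : C) (m : Hom t t') (n : Hom t' t) :
  is_terminal t -> comp m n = idm t' -> is_terminal t'.
Proof.
  intros Ht e X. destruct (Ht X) as [f _]. exists (comp m f). intro g.
  rewrite <- (comp_id_l g), <- e, <- comp_assoc. f_equal. apply term_uniq; auto.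
Qed.

Lemma is_product_arr (C : Category) (a b p a' b' p' : C) (p1 : Hom p a) (p2 : Hom p b)
  (q1 : Hom p' a') (q2 : Hom p' b') :
  arr p1 = arr q1 -> arr p2 = arr q2 -> is_product p1 p2 -> is_product q1 q2.
Proof.
  intros H1 H2. destruct (arr_objs H1) as [e1 e2]. destruct (arr_objs H2) as [e3 e4].
  subst. apply arr_inj in H1. apply arr_inj in H2. subst. auto.
Qed.

Lemma factor (T V B : Theory) (v : TMor T V) (a : TMor T B) :
  full v -> bijective_on_objects v ->
  (forall (X Y : T) (f f' : Hom X Y), fmap v f = fmap v f' -> fmap a f = fmap a f') ->
  exists at_ : TMor V B, tcomp at_ v = a /\ forall b : TMor V B, tcomp b v = a -> b = at_.
Proof.
  intros Hfull [Hinj Hsurj] Hresp.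
  pose (pre := fun y : V => proj1_sig (constructive_indefinite_description _ (Hsurj y))).
  assert (Hpre : forall y, v (pre y) = y)
    by (intro y; exact (proj2_sig (constructive_indefinite_description _ (Hsurj y)))).
  assert (Hpv : forall x, pre (v x) = x) by (intro; apply Hinj, Hpre).
  assert (Hex : forall (y y' : V) (g : Hom y y'), exists f : Hom (pre y) (pre y'), arr (fmap v f) = arr g).
  { intros y y' g. destruct (arr_transport g (Hpre y) (Hpre y')) as [h Hh].
    destruct (Hfull _ _ h) as [f Hf]. exists f. rewrite Hf; auto. }
  pose (atm := fun (y y' : V) (g : Hom y y') =>
     fmap a (proj1_sig (constructive_indefinite_description _ (Hex y y' g)))).
  assert (Hkey : forall (x x' : T) (f : Hom x x'), arr (atm _ _ (fmap v f)) = arr (fmap a f)).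
  { intros x x' f. unfold atm. destruct (constructive_indefinite_description _ _) as [f0 Hf0]. simpl.
    generalize (Hpv x) (Hpv x'). revert f0 Hf0. generalize (pre (v x)) (pre (v x')).
    intros z z' f0 Hf0 e e'. subst. apply arr_inj in Hf0. rewrite (Hresp _ _ _ _ Hf0). reflexivity. }
  assert (Hid : forall y : V, atm y y (idm y) = idm (a (pre y))).
  { intro y. destruct (Hsurj y) as [x <-]. apply arr_inj. rewrite <- (fmap_id v x), Hkey, fmap_id.
    rewrite Hpv. reflexivity. }
  assert (Hcomp : forall (y y' y'' : V) (g : Hom y' y'') (h : Hom y y'),
             atm _ _ (comp g h) = comp (atm _ _ g) (atm _ _ h)).
  { intros y y' y'' g h. destruct (Hsurj y) as [x <-]. destruct (Hsurj y') as [x' <-].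
    destruct (Hsurj y'') as [x'' <-]. destruct (Hfull _ _ g) as [f <-].
    destruct (Hfull _ _ h) as [k <-]. apply arr_inj. rewrite <- fmap_comp, Hkey, fmap_comp.
    apply arr_comp; symmetry; apply Hkey. }
  assert (Hterm : forall y : V, is_terminal y -> is_terminal (a (pre y))).
  { intros y Hy. destruct (Hsurj y) as [x <-]. rewrite Hpv.
    destruct (th_fp T) as [[t0 Ht0] _].
    destruct (Ht0 x) as [u _]. destruct (Hy (v t0)) as [z _]. destruct (Hfull _ _ z) as [w Hw].
    apply term_retract with (t := a t0) (m := fmap a w) (n := fmap a u).
    - apply pres_terminal; auto.
    - rewrite <- fmap_comp, <- fmap_id. apply Hresp. rewrite fmap_comp, fmap_id. apply term_uniq; auto. }
  assert (Hprod : forall (a0 b0 p : V) (p1 : Hom p a0) (p2 : Hom p b0),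
             is_product p1 p2 -> is_product (atm _ _ p1) (atm _ _ p2)).
  { intros a0 b0 p0 p1 p2 H. destruct (Hsurj a0) as [x1 <-]. destruct (Hsurj b0) as [x2 <-].
    destruct (Hsurj p0) as [x <-]. destruct (Hfull _ _ p1) as [f1 <-].
    destruct (Hfull _ _ p2) as [f2 <-].
    apply is_product_arr with (p1 := fmap a f1) (p2 := fmap a f2); [symmetry; apply Hkey .. |].
    destruct (th_fp T) as [_ Hp]. destruct (Hp x1 x2) as [p [pi1 [pi2 Hpi]]].
    destruct (Hpi x f1 f2) as [u [u1 [u2 _]]].
    destruct (H (v p) (fmap v pi1) (fmap v pi2)) as [z [z1 [z2 _]]].
    destruct (Hfull _ _ z) as [w Hw]. subst z.
    apply prod_retract with (p1 := fmap a pi1) (p2 := fmap a pi2) (m := fmap a w) (n := fmap a u).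
    - apply pres_product; auto.
    - rewrite <- fmap_comp. apply Hresp. rewrite fmap_comp. exact z1.
    - rewrite <- fmap_comp. apply Hresp. rewrite fmap_comp. exact z2.
    - rewrite <- fmap_comp, u1; auto.
    - rewrite <- fmap_comp, u2; auto.
    - rewrite <- fmap_comp, <- fmap_id. apply Hresp. rewrite fmap_comp, fmap_id.
      apply (prod_uniq H).
      + rewrite comp_assoc, z1, <- fmap_comp, u1, comp_id_r; auto.
      + rewrite comp_assoc, z2, <- fmap_comp, u2, comp_id_r; auto. }
  exists (@Build_TMor V B (fun y => a (pre y)) atm Hid Hcomp Hterm Hprod).
  split.
  - apply tmor_ext.
    + intro x; simpl. rewrite Hpv; auto.
    + intros x x' f. exact (Hkey _ _ f).
  - intros b Hb. apply tmor_ext.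
    + intro y; destruct (Hsurj y) as [x <-]; simpl. rewrite Hpv. exact (tmor_obj x Hb).
    + intros y y' g. destruct (Hsurj y) as [x <-]. destruct (Hsurj y') as [x' <-].
      destruct (Hfull _ _ g) as [f <-]. simpl. rewrite Hkey. exact (tmor_arr f Hb).
Qed.

Inductive cong (C : Category) (gen : forall X Y : C, Hom X Y -> Hom X Y -> Prop)
  : forall X Y : C, Hom X Y -> Hom X Y -> Prop :=
| cg_gen : forall X Y (f g : Hom X Y), gen X Y f g -> cong gen f g
| cg_refl : forall X Y (f : Hom X Y), cong gen f f
| cg_sym : forall X Y (f g : Hom X Y), cong gen f g -> cong gen g f
| cg_trans : forall X Y (f g h : Hom X Y), cong gen f g -> cong gen g h -> cong gen f h
| cg_compl : forall X Y Z (g : Hom Y Z) (f f' : Hom X Y), cong gen f f' -> cong gen (comp g f) (comp g f')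
| cg_compr : forall X Y Z (g g' : Hom Y Z) (f : Hom X Y), cong gen g g' -> cong gen (comp g f) (comp g' f)
| cg_prod : forall (a b p : C) (p1 : Hom p a) (p2 : Hom p b) X (h h' : Hom X p),
    is_product p1 p2 -> cong gen (comp p1 h) (comp p1 h') -> cong gen (comp p2 h) (comp p2 h') ->
    cong gen h h'.

Lemma cg_comp (C : Category) gen (X Y Z : C) (g g' : Hom Y Z) (f f' : Hom X Y) :
  cong gen f f' -> cong gen g g' -> cong gen (comp g f) (comp g' f').
Proof. intros; eapply cg_trans; [apply cg_compl; eauto | apply cg_compr; auto]. Qed.

Definition QHom (C : Category) (gen : forall X Y : C, Hom X Y -> Hom X Y -> Prop) (X Y : C) :=
  {c : Hom X Y -> Prop | exists f, c = @cong C gen X Y f}.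

Definition qrep (C : Category) gen (X Y : C) (c : QHom gen X Y) : Hom X Y :=
  proj1_sig (constructive_indefinite_description _ (proj2_sig c)).
Arguments qrep {C gen X Y} c.
Definition qcls (C : Category) gen (X Y : C) (f : Hom X Y) : QHom gen X Y :=
  exist _ (@cong C gen X Y f) (ex_intro _ f eq_refl).

Lemma qrep_spec (C : Category) gen (X Y : C) (c : QHom gen X Y) : proj1_sig c = cong gen (qrep c).
Proof. unfold qrep. exact (proj2_sig (constructive_indefinite_description _ (proj2_sig c))). Qed.

Lemma qhom_ext (C : Category) gen (X Y : C) (c d : QHom gen X Y) :
  proj1_sig c = proj1_sig d -> c = d.
Proof. destruct c, d; simpl; intro; subst; f_equal; apply proof_irrelevance. Qed.

Lemma qcls_rep (C : Category) gen (X Y : C) (c : QHom gen X Y) : qcls gen (qrep c) = c.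
Proof. apply qhom_ext. simpl. symmetry. apply qrep_spec. Qed.

Lemma qrep_cls (C : Category) gen (X Y : C) (f : Hom X Y) : cong gen (qrep (qcls gen f)) f.
Proof.
  pose proof (qrep_spec (qcls gen f)) as H. simpl in H.
  assert (E : cong gen f f) by apply cg_refl. rewrite H in E. exact E.
Qed.

Lemma qcls_eq (C : Category) gen (X Y : C) (f g : Hom X Y) : cong gen f g -> qcls gen f = qcls gen g.
Proof.
  intro H. apply qhom_ext; simpl.
  apply functional_extensionality; intro h. apply propositional_extensionality. split; intro K.
  - eapply cg_trans; [apply cg_sym, H | exact K].
  - eapply cg_trans; [exact H | exact K].
Qed.

Lemma qcls_inj (C : Category) gen (X Y : C) (f g : Hom X Y) : qcls gen f = qcls gen g -> cong gen f g.
Proof.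
  intro H. apply (f_equal (@proj1_sig _ _)) in H. simpl in H.
  assert (E : cong gen g g) by apply cg_refl. rewrite <- H in E. exact E.
Qed.

Definition qcomp (C : Category) gen (A B C0 : C) (g : QHom gen B C0) (f : QHom gen A B) : QHom gen A C0 :=
  qcls gen (comp (qrep g) (qrep f)).
Arguments qcomp {C gen A B C0} g f.

Lemma qcomp_cls (C : Category) gen (A B C0 : C) (g : Hom B C0) (f : Hom A B) :
  qcomp (qcls gen g) (qcls gen f) = qcls gen (comp g f).
Proof. apply qcls_eq. apply cg_comp; apply qrep_cls. Qed.

Definition QCat (C : Category) (gen : forall X Y : C, Hom X Y -> Hom X Y -> Prop) : Category.
Proof.
  refine (@Build_Category (Ob C) (QHom gen) (fun A => qcls gen (idm A)) (@qcomp C gen) _ _ _).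
  - intros A B f. rewrite <- (qcls_rep f), qcomp_cls, comp_id_l. reflexivity.
  - intros A B f. rewrite <- (qcls_rep f), qcomp_cls, comp_id_r. reflexivity.
  - intros A B C0 D h g f. rewrite <- (qcls_rep f), <- (qcls_rep g), <- (qcls_rep h), !qcomp_cls.
    rewrite comp_assoc. reflexivity.
Defined.

Lemma q_term (C : Category) gen (t : C) : is_terminal t -> @is_terminal (QCat gen) t.
Proof.
  intros Ht X. destruct (Ht X) as [f _]. exists (qcls gen f). intro g.
  rewrite <- (qcls_rep g). f_equal. apply term_uniq; auto.
Qed.

Lemma q_prod (C : Category) gen (a b p : C) (p1 : Hom p a) (p2 : Hom p b) :
  is_product p1 p2 -> @is_product (QCat gen) a b p (qcls gen p1) (qcls gen p2).
Proof.
  intros Hp X f g. destruct (Hp X (qrep f) (qrep g)) as [h [h1 [h2 _]]].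
  exists (qcls gen h). simpl. repeat split.
  - rewrite qcomp_cls, h1, qcls_rep; auto.
  - rewrite qcomp_cls, h2, qcls_rep; auto.
  - intros k k1 k2. rewrite <- (qcls_rep k) in *. rewrite qcomp_cls in k1, k2.
    apply qcls_eq. apply (cg_prod Hp).
    + apply qcls_inj. rewrite k1, h1, qcls_rep; auto.
    + apply qcls_inj. rewrite k2, h2, qcls_rep; auto.
Qed.

Definition QTh (T : Theory) (gen : forall X Y : T, Hom X Y -> Hom X Y -> Prop) : Theory.
Proof.
  refine (@Build_Theory (QCat gen) _).
  destruct (th_fp T) as [[t Ht] Hp]. split.
  - exists t. apply q_term; auto.
  - intros a b. destruct (Hp a b) as [p [p1 [p2 H]]].
    exists p, (qcls gen p1), (qcls gen p2). apply q_prod; auto.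
Defined.

Definition qmor (T : Theory) (gen : forall X Y : T, Hom X Y -> Hom X Y -> Prop) : TMor T (QTh gen).
Proof.
  refine (@Build_TMor T (QTh gen) (fun A => A) (fun A B f => qcls gen f) _ _ _ _).
  - intros; reflexivity.
  - intros. simpl. symmetry. apply qcomp_cls.
  - intros. apply q_term; auto.
  - intros. apply q_prod; auto.
Defined.

Lemma qmor_full (T : Theory) (gen : forall X Y : T, Hom X Y -> Hom X Y -> Prop) : full (qmor (T:=T) gen).
Proof. intros A B g. exists (qrep g). apply qcls_rep. Qed.

Lemma qmor_bij (T : Theory) (gen : forall X Y : T, Hom X Y -> Hom X Y -> Prop) : bijective_on_objects (qmor (T:=T) gen).
Proof. split. - intros x y H; exact H. - intro y; exists y; reflexivity. Qed.

Lemma resp_cong (T B : Theory) gen (a : TMor T B) :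
  (forall X Y (f g : Hom X Y), gen X Y f g -> fmap a f = fmap a g) ->
  forall X Y (f g : Hom X Y), cong gen f g -> fmap a f = fmap a g.
Proof.
  intros Hg X Y f g H. induction H; try congruence.
  - auto.
  - rewrite !fmap_comp; congruence.
  - rewrite !fmap_comp; congruence.
  - apply (prod_uniq (@pres_product _ _ a _ _ _ _ _ H)); rewrite <- !fmap_comp; auto.
Qed.

Definition Egen (A : Theory) (E : Cosystem A) : forall X Y : A, Hom X Y -> Hom X Y -> Prop :=
  fun X Y g g' => exists i (A0 B0 : @cs_dom A E i) (f : Hom A0 B0),
      arr g = arr (fmap (@cs_P A E i) f) /\ arr g' = arr (fmap (@cs_Q A E i) f).

Lemma lawvere_obj (T' T : Theory) (P Q : TMor T' T) :
  is_Lawvere_equation P Q -> forall y, P y = Q y.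
Proof.
  intros [T'' [U [HU He]]] y. destruct (HU y) as [x <-]. exact (tmor_obj x He).
Qed.

Lemma arr_qcls (C : Category) gen (X Y X' Y' : C) (g : Hom X Y) (g' : Hom X' Y') :
  X = X' -> Y = Y' -> (forall h : Hom X Y, arr h = arr g' -> cong gen g h) ->
  @arr (QCat gen) X Y (qcls gen g) = @arr (QCat gen) X' Y' (qcls gen g').
Proof.
  intros e1 e2 H. subst. f_equal. apply qcls_eq. apply H. reflexivity.
Qed.

Lemma part1 (A : Theory) (E : Cosystem A) :
  is_Lawvere_cosystem E -> is_general_cosolution E (qmor (T:=A) (Egen E)).
Proof.
  intro HL. split.
  - intro i. apply tmor_ext.
    + intro x. simpl. apply lawvere_obj, HL.
    + intros A0 B0 f. simpl. apply arr_qcls; try apply lawvere_obj, HL.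
      intros h Hh. apply cg_gen. exists i, A0, B0, f. split; auto.
  - intros B a Ha. apply factor; [apply qmor_full | apply qmor_bij |].
    intros X Y f f' H. apply (resp_cong (gen := Egen E)); [ | apply qcls_inj; exact H].
    intros X0 Y0 g g' [i [A0 [B0 [f0 [e1 e2]]]]]. apply arr_inj.
    rewrite (arr_map a e1), (arr_map a e2). exact (tmor_arr f0 (Ha i)).
Qed.

Lemma covariety_full (T V : Theory) (v : TMor T V) :
  is_Lawvere_covariety v -> full v /\ bijective_on_objects v.
Proof.
  intros [E [HL [Hvc Hvu]]].
  destruct (part1 HL) as [Hqc Hqu].
  destruct (Hqu V v Hvc) as [s [Hs _]].
  destruct (Hvu _ _ Hqc) as [t [Ht _]].
  assert (Hst : tcomp s t = tid V).
  { destruct (Hvu V v Hvc) as [w [_ Hw]].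
    rewrite (Hw (tcomp s t)), (Hw (tid V)); auto.
    - apply tcomp_id_l.
    - rewrite tcomp_assoc, Ht. exact Hs. }
  split; [|split].
  - intros A0 B0 g.
    pose proof (tmor_obj A0 Ht) as eA. pose proof (tmor_obj B0 Ht) as eB. simpl in eA, eB.
    destruct (@arr_transport (QTh (Egen E)) _ _ A0 B0 (fmap t g) (eq_sym eA) (eq_sym eB)) as [h Hh].
    exists (qrep h). apply arr_inj.
    rewrite <- (tmor_arr (qrep h) Hs). simpl.
    rewrite qcls_rep. rewrite (arr_map s Hh).
    exact (tmor_arr g Hst).
  - intros x y H. pose proof (tmor_obj x Ht) as ex. pose proof (tmor_obj y Ht) as ey.
    simpl in ex, ey. rewrite <- ex, <- ey, H. reflexivity.
  - intro y. exists (t y). rewrite <- (@tmor_obj T V _ _ (t y) Hs). exact (tmor_obj y Hst).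
Qed.

Definition KHom (T V : Theory) (v : TMor T V) (A B : T) :=
  {fg : Hom A B * Hom A B | fmap v (fst fg) = fmap v (snd fg)}.

Lemma keq (T V : Theory) (v : TMor T V) (A B : T) (x y : KHom v A B) :
  proj1_sig x = proj1_sig y -> x = y.
Proof. destruct x, y; simpl; intro; subst; f_equal; apply proof_irrelevance. Qed.

Definition kid (T V : Theory) (v : TMor T V) (A : T) : KHom v A A :=
  exist _ (idm A, idm A) eq_refl.

Definition kcomp (T V : Theory) (v : TMor T V) (A B C : T) (g : KHom v B C) (f : KHom v A B)
  : KHom v A C.
Proof.
  refine (exist _ (comp (fst (proj1_sig g)) (fst (proj1_sig f)),
                   comp (snd (proj1_sig g)) (snd (proj1_sig f))) _).
  simpl. rewrite !fmap_comp, (proj2_sig g), (proj2_sig f). reflexivity.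
Defined.

Definition KCat (T V : Theory) (v : TMor T V) : Category.
Proof.
  refine (@Build_Category (Ob T) (KHom v) (@kid T V v) (@kcomp T V v) _ _ _).
  - intros A B f. apply keq. simpl. rewrite !comp_id_l. destruct (proj1_sig f); reflexivity.
  - intros A B f. apply keq. simpl. rewrite !comp_id_r. destruct (proj1_sig f); reflexivity.
  - intros A B C D h g f. apply keq. simpl. rewrite !comp_assoc. reflexivity.
Defined.

Definition kdiag (T V : Theory) (v : TMor T V) (A B : T) (f : Hom A B) : KHom v A B :=
  exist _ (f, f) eq_refl.

Lemma kdiag_term (T V : Theory) (v : TMor T V) (t : T) :
  is_terminal t -> @is_terminal (KCat v) t.
Proof.
  intros Ht X. destruct (Ht X) as [f _]. exists (kdiag v f). intro g. apply keq. simpl.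
  destruct (proj1_sig g) as [g1 g2]. f_equal; apply term_uniq; auto.
Qed.

Lemma kdiag_prod (T V : Theory) (v : TMor T V) (a b p : T) (p1 : Hom p a) (p2 : Hom p b) :
  is_product p1 p2 -> @is_product (KCat v) a b p (kdiag v p1) (kdiag v p2).
Proof.
  intros Hp X f g.
  destruct f as [[f1 f2] ef]. destruct g as [[g1 g2] eg]. simpl in ef, eg.
  destruct (Hp X f1 g1) as [h [h1 [h2 U]]].
  destruct (Hp X f2 g2) as [h' [h1' [h2' U']]].
  assert (eh : fmap v h = fmap v h').
  { apply (prod_uniq (@pres_product _ _ v _ _ _ _ _ Hp)); rewrite <- !fmap_comp.
    - rewrite h1, h1'; auto. - rewrite h2, h2'; auto. }
  exists (exist _ (h, h') eh). split; [|split].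
  - apply keq; simpl. rewrite h1, h1'; auto.
  - apply keq; simpl. rewrite h2, h2'; auto.
  - intros k k1 k2. apply keq. simpl.
    apply (f_equal (@proj1_sig _ _)) in k1. apply (f_equal (@proj1_sig _ _)) in k2.
    simpl in k1, k2. destruct (proj1_sig k) as [k' k'']. simpl in k1, k2.
    inversion k1. inversion k2. f_equal; [apply U | apply U']; auto.
Qed.

Definition KTh (T V : Theory) (v : TMor T V) : Theory.
Proof.
  refine (@Build_Theory (KCat v) _).
  destruct (th_fp T) as [[t Ht] Hp]. split.
  - exists t. apply kdiag_term; auto.
  - intros a b. destruct (Hp a b) as [p [p1 [p2 H]]].
    exists p, (kdiag v p1), (kdiag v p2). apply kdiag_prod; auto.
Defined.

Definition ksel (b : bool) (T : Category) (X Y : T) (p : Hom X Y * Hom X Y) : Hom X Y :=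
  if b then fst p else snd p.

Lemma kc_sel (T V : Theory) (v : TMor T V) b (A B C : T) (g : KHom v B C) (f : KHom v A B) :
  ksel b (proj1_sig (@comp (KCat v) _ _ _ g f)) = comp (ksel b (proj1_sig g)) (ksel b (proj1_sig f)).
Proof. destruct b; reflexivity. Qed.

Lemma kdiag_sel (T V : Theory) (v : TMor T V) b (A B : T) (f : Hom A B) :
  ksel b (proj1_sig (kdiag v f)) = f.
Proof. destruct b; reflexivity. Qed.

Lemma kid_sel (T V : Theory) (v : TMor T V) b (A : T) :
  ksel b (proj1_sig (@idm (KCat v) A)) = idm A.
Proof. destruct b; reflexivity. Qed.

Definition kS (T V : Theory) (v : TMor T V) : TMor T (KTh v).
Proof.
  refine (@Build_TMor T (KTh v) (fun A => A) (fun A B f => kdiag v f) _ _ _ _).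
  - intros; reflexivity.
  - intros; apply keq; reflexivity.
  - intros; apply kdiag_term; auto.
  - intros; apply kdiag_prod; auto.
Defined.

Definition kP (T V : Theory) (v : TMor T V) (b : bool) : TMor (KTh v) T.
Proof.
  refine (@Build_TMor (KTh v) T (fun A => A) (fun A B f => ksel b (proj1_sig f)) _ _ _ _).
  - intros; destruct b; reflexivity.
  - intros; destruct b; reflexivity.
  - intros t Ht X. destruct (Ht X) as [f Hf]. exists (ksel b (proj1_sig f)). intro g.
    rewrite <- (Hf (kdiag v g)). symmetry. apply kdiag_sel.
  - intros a c p' c1 c2 Hc. simpl.
    destruct (th_fp T) as [_ Hp]. destruct (Hp a c) as [p [pi1 [pi2 Hpi]]].
    pose proof (@kdiag_prod T V v _ _ _ _ _ Hpi) as HK.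
    destruct (Hc p (kdiag v pi1) (kdiag v pi2)) as [m [m1 [m2 _]]].
    destruct (HK p' c1 c2) as [n [n1 [n2 _]]].
    assert (mn : @comp (KCat v) _ _ _ m n = idm p').
    { destruct (Hc p' c1 c2) as [h [_ [_ U]]].
      rewrite (U (@comp (KCat v) _ _ _ m n)), (U (idm p')); auto.
      all: try (rewrite comp_id_r; reflexivity).
      - rewrite comp_assoc. transitivity (@comp (KCat v) _ _ _ (kdiag v pi1) n); [f_equal; exact m1 | exact n1].
      - rewrite comp_assoc. transitivity (@comp (KCat v) _ _ _ (kdiag v pi2) n); [f_equal; exact m2 | exact n2]. }
    apply prod_retract with (p1 := pi1) (p2 := pi2) (m := ksel b (proj1_sig m)) (n := ksel b (proj1_sig n)).
    + exact Hpi.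
    + rewrite <- kc_sel. rewrite <- (kdiag_sel v b pi1). exact (f_equal (fun k : KHom v p a => ksel b (proj1_sig k)) m1).
    + rewrite <- kc_sel. rewrite <- (kdiag_sel v b pi2). exact (f_equal (fun k : KHom v p c => ksel b (proj1_sig k)) m2).
    + rewrite <- (kdiag_sel v b pi1), <- kc_sel. exact (f_equal (fun k : KHom v p' a => ksel b (proj1_sig k)) n1).
    + rewrite <- (kdiag_sel v b pi2), <- kc_sel. exact (f_equal (fun k : KHom v p' c => ksel b (proj1_sig k)) n2).
    + rewrite <- kc_sel, mn. apply kid_sel.
Defined.

Lemma kcoeq (T V : Theory) (v : TMor T V) :
  full v -> bijective_on_objects v -> is_coequalizer (kP v true) (kP v false) v.
Proof.
  intros Hf Hb. split.
  - apply tmor_ext; [reflexivity|]. intros A0 B0 f. simpl. f_equal. exact (proj2_sig f).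
  - intros B a Ha. apply factor; auto. intros X Y f f' H.
    exact (arr_inj (@tmor_arr (KTh v) B _ _ X Y (exist _ (f, f') H : KHom v X Y) Ha)).
Qed.

Lemma k_refl (T V : Theory) (v : TMor T V) : is_reflexive_pair (kP v true) (kP v false).
Proof. exists (kS v). split; apply tmor_ext; reflexivity. Qed.

Lemma k_law (T V : Theory) (v : TMor T V) : is_Lawvere_equation (kP v true) (kP v false).
Proof.
  exists T, (kS v). split.
  - intro y; exists y; reflexivity.
  - apply tmor_ext; reflexivity.
Qed.

Lemma full_covariety (T V : Theory) (v : TMor T V) :
  full v -> bijective_on_objects v -> is_Lawvere_covariety v.
Proof.
  intros Hf Hb. destruct (kcoeq Hf Hb) as [H1 H2].
  exists (@Build_Cosystem T unit (inhabits tt) (fun _ => KTh v) (fun _ => kP v true) (fun _ => kP v false)).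
  split; [|split].
  - intro i. apply k_law.
  - intro i. exact H1.
  - intros B a Ha. apply H2. exact (Ha tt).
Qed.

Theorem mainTheorem13 :
  (forall (A : Theory) (E : Cosystem A), is_Lawvere_cosystem E ->
     exists (V : Theory) (v : TMor A V), is_general_cosolution E v) /\
  (forall (T V : Theory) (v : TMor T V),
     is_Lawvere_covariety v <-> (full v /\ bijective_on_objects v)) /\
  (forall (T V : Theory) (v : TMor T V), is_Lawvere_covariety v ->
     exists (T' : Theory) (P Q : TMor T' T),
       is_reflexive_pair P Q /\ is_Lawvere_equation P Q /\ is_coequalizer P Q v).
Proof.
  split; [|split].
  - intros A E HL. exists (QTh (Egen E)), (qmor (T:=A) (Egen E)). apply part1; auto.
  - intros T V v. split.
    + apply covariety_full.
    + intros [Hf Hb]. apply full_covariety; auto.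
  - intros T V v Hv. destruct (covariety_full Hv) as [Hf Hb].
    exists (KTh v), (kP v true), (kP v false). split; [apply k_refl | split; [apply k_law | apply kcoeq; auto]].
Qed.
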